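(* Let $J$ be a subgroup of the group $\mathcal{J}$ of simple-currents. Then $J$ contains no quaternionic elements if and only if there is a group homomorphism $\epsilon:J\to\widehat{J}$, $j\mapsto\epsilon_j$, satisfying $$\mathcal{Q}_j(j')\,\epsilon_j(j')\,\epsilon_{j'}(j)=1\quad\forall j,j'\in J,\qquad \epsilon_j(j)=T_{j,j}\overline{T_{\mathbf{0},\mathbf{0}}}\quad\forall j\in J.$$ Moreover, if $J$ contains no quaternionic elements, the set of all such $\epsilon$ is in bijection with $H^2(J;\mathbb{T})$.
   Context: Let $\mathcal{C}$ be a modular tensor category, $\Phi$ its finite set of isomorphism classes of simple objects, $\mathbf{0}$ the unit class, and $S,T$ its modular data matrices (indexed by $\Phi$). Simple-currents are the invertible simple objects; their classes form a finite abelian group $\mathcal{J}\subseteq\Phi$ under fusion. For $a\in\Phi$, $\mathcal{Q}_a\in\widehat{\mathcal{J}}$ is the character $\mathcal{Q}_a(j)=S_{j,a}S_{\mathbf{0},\mathbf{0}}/(S_{j,\mathbf{0}}S_{\mathbf{0},a})$. An element $j\in\mathcal{J}$ is quaternionic if the multiplicative order of $\mathcal{Q}_j(j)$ in $\mathbb{C}^\times$ equals the order of $j$ in $\mathcal{J}$ and this order is even. $H^2(J;\mathbb{T})$ is group cohomology with trivial coefficients in the unit circle. *)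

(* Defs.v *)
From mathcomp Require Import all_boot all_order all_algebra all_fingroup all_field.
Set Implicit Arguments. Unset Strict Implicit. Unset Printing Implicit Defensive.
Import GRing.Theory Num.Theory.
Local Open Scope ring_scope.

(* Modular data: Phi = simple classes, o = unit class 0, S T : Phi x Phi matrices
   (as functions), over the algebraic complex numbers algC.
   The simple-currents group is modelled as an abstract finite group gT with an
   embedding cur : gT -> Phi (cur j = the class of the simple current j), the
   group law of gT being fusion. *)

Definition Qch (Phi : finType) (o : Phi) (S : Phi -> Phi -> algC) (a x : Phi) : algC :=
  S x a * S o o / (S x o * S o a).

Definition QJ (Phi : finType) (o : Phi) (S : Phi -> Phi -> algC)
    (gT : finGroupType) (cur : gT -> Phi) (j j' : gT) : algC :=
  Qch o S (cur j) (cur j').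

(* Standard facts valid for the modular data of any modular tensor category
   (with the paper's conventions), restricted to what concerns simple currents. *)
Definition sc_modular_data (Phi : finType) (o : Phi) (S T : Phi -> Phi -> algC)
    (gT : finGroupType) (cur : gT -> Phi) : Prop :=
  [/\ abelian [set: gT], injective cur, cur 1%g = o,
      (forall a b, S a b = S b a)
    & (forall a, S o a != 0)] /\
  [/\
      (forall a, `|T a a| = 1),
      (forall a (j k : gT), Qch o S a (cur (j * k)%g) = Qch o S a (cur j) * Qch o S a (cur k)),
      (forall j k : gT, QJ o S cur j k =
          T (cur j) (cur j) * T (cur k) (cur k) / (T (cur (j * k)%g) (cur (j * k)%g) * T o o))
    & (forall j : gT, T (cur j^-1%g) (cur j^-1%g) = T (cur j) (cur j))].

Definition quaternionic (Phi : finType) (o : Phi) (S : Phi -> Phi -> algC)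
    (gT : finGroupType) (cur : gT -> Phi) (j : gT) : bool :=
  (#[j]%g).-primitive_root (QJ o S cur j j) && ~~ odd #[j]%g.

(* eps : J -> \hat J, j |-> eps_j, written eps j j' = eps_j(j'); only its values
   on J x J matter. *)
Definition eps_ok (Phi : finType) (o : Phi) (S T : Phi -> Phi -> algC)
    (gT : finGroupType) (cur : gT -> Phi) (J : {group gT}) (eps : gT -> gT -> algC) : Prop :=
  [/\
      (forall j k, j \in J -> k \in J -> `|eps j k| = 1),
      (forall j k k', j \in J -> k \in J -> k' \in J -> eps j (k * k')%g = eps j k * eps j k'),
      (forall j j' k, j \in J -> j' \in J -> k \in J -> eps (j * j')%g k = eps j k * eps j' k),
      (forall j j', j \in J -> j' \in J -> QJ o S cur j j' * eps j j' * eps j' j = 1)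
    & (forall j, j \in J -> eps j j = T (cur j) (cur j) * (T o o)^*)].

(* Group cohomology H^2(J; T), trivial coefficients in the unit circle T:
   normalized-free 2-cocycles modulo coboundaries. *)
Definition cocycle2 (gT : finGroupType) (J : {group gT}) (w : gT -> gT -> algC) : Prop :=
  (forall a b, a \in J -> b \in J -> `|w a b| = 1) /\
  (forall a b c, a \in J -> b \in J -> c \in J ->
     w b c * w a (b * c)%g = w (a * b)%g c * w a b).

Definition cohomologous (gT : finGroupType) (J : {group gT}) (w w' : gT -> gT -> algC) : Prop :=
  exists beta : gT -> algC,
    (forall a, a \in J -> `|beta a| = 1) /\
    (forall a b, a \in J -> b \in J -> w' a b = w a b * beta a * beta b / beta (a * b)%g).

(* The set {eps | eps_ok eps} (functions on J x J) is in bijection with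
   H^2(J;T) = {cocycles}/cohomologous: there is a map F to cocycles inducing a
   well-defined, injective and surjective map to cohomology classes. *)
Definition eps_H2_bijection (Phi : finType) (o : Phi) (S T : Phi -> Phi -> algC)
    (gT : finGroupType) (cur : gT -> Phi) (J : {group gT}) : Prop :=
  exists F : (gT -> gT -> algC) -> (gT -> gT -> algC),
    [/\ (forall eps, eps_ok o S T cur J eps -> cocycle2 J (F eps)),
        (forall eps eps', eps_ok o S T cur J eps -> eps_ok o S T cur J eps' ->
           (forall j k, j \in J -> k \in J -> eps j k = eps' j k) ->
           cohomologous J (F eps) (F eps')),
        (forall eps eps', eps_ok o S T cur J eps -> eps_ok o S T cur J eps' ->
           cohomologous J (F eps) (F eps') ->
           forall j k, j \in J -> k \in J -> eps j k = eps' j k)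
      & (forall w, cocycle2 J w ->
           exists2 eps, eps_ok o S T cur J eps & cohomologous J (F eps) w)].

(* Main.v *)
Require Import Defs.
From mathcomp Require Import all_boot all_order all_algebra all_fingroup all_field.
From mathcomp Require Import all_solvable.
From mathcomp Require Import ring zify.
From Stdlib Require Import IndefiniteDescription ClassicalEpsilon.
Import GRing.Theory Num.Theory.
Set Implicit Arguments. Unset Strict Implicit. Unset Printing Implicit Defensive.

Definition mpow (A : Type) (mul : A -> A -> A) (one : A) (a : A) (n : nat) : A :=
  iter n (mul a) one.

Lemma P_mpow (A : Type) (mul : A -> A -> A) (one : A) (P : A -> Prop)
  (P1 : P one) (PM : forall a b, P a -> P b -> P (mul a b)) a n :
  P a -> P (mpow mul one a n).
Proof. by move=> Pa; elim: n => //= n IH; apply: PM. Qed.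

Lemma mpowD (A : Type) (mul : A -> A -> A) (one : A) (P : A -> Prop)
  (P1 : P one) (PM : forall a b, P a -> P b -> P (mul a b))
  (mA : forall a b c, P a -> P b -> P c -> mul a (mul b c) = mul (mul a b) c)
  (m1 : forall a, P a -> mul one a = a) a m n :
  P a -> mpow mul one a (m + n) = mul (mpow mul one a m) (mpow mul one a n).
Proof.
move=> Pa; elim: m => [|m IH] /=; first by rewrite m1 //; apply: P_mpow.
by rewrite IH mA //; apply: P_mpow.
Qed.

Lemma mpow_mod (A : Type) (mul : A -> A -> A) (one : A) (P : A -> Prop)
  (P1 : P one) (PM : forall a b, P a -> P b -> P (mul a b))
  (mA : forall a b c, P a -> P b -> P c -> mul a (mul b c) = mul (mul a b) c)
  (m1 : forall a, P a -> mul one a = a) a N m :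
  P a -> mpow mul one a N = one -> mpow mul one a m = mpow mul one a (m %% N).
Proof.
move=> Pa HN; rewrite {1}(divn_eq m N); elim: (m %/ N) => [|q IH].
  by rewrite mul0n add0n.
rewrite mulSn -addnA (mpowD P1 PM mA m1) // HN m1 //; apply: P_mpow => //.
Qed.

Definition expo (gT : finGroupType) (x y : gT) : nat :=
  index y (mkseq (fun i => (x ^+ i)%g) #[x]%g).

Lemma expo_lt (gT : finGroupType) (x y : gT) : y \in <[x]>%g -> expo x y < #[x]%g.
Proof.
case/cycleP => i ->; rewrite /expo.
have Hin : (x ^+ i)%g \in mkseq (fun i => (x ^+ i)%g) #[x]%g.
  apply/mapP; exists (i %% #[x]%g); last by rewrite expg_mod_order.
  by rewrite mem_iota add0n ltn_mod order_gt0.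
by rewrite -[X in _ < X](size_mkseq (fun i => (x ^+ i)%g) #[x]%g) index_mem.
Qed.

Lemma expoP (gT : finGroupType) (x y : gT) : y \in <[x]>%g -> (x ^+ expo x y)%g = y.
Proof.
move=> Hy; have Hlt := expo_lt Hy.
case/cycleP: Hy => i Hi; subst y.
have Hin : (x ^+ i)%g \in mkseq (fun i => (x ^+ i)%g) #[x]%g.
  apply/mapP; exists (i %% #[x]%g); last by rewrite expg_mod_order.
  by rewrite mem_iota add0n ltn_mod order_gt0.
by have := nth_index 1%g Hin; rewrite nth_mkseq.
Qed.

Lemma expo1 (gT : finGroupType) (x : gT) : expo x 1 = 0.
Proof. by rewrite /expo /mkseq; case: #[x]%g (order_gt0 x) => // n _ /=; rewrite eqxx. Qed.

Lemma expoM (gT : finGroupType) (x y z : gT) : y \in <[x]>%g -> z \in <[x]>%g ->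
  expo x (y * z) = expo x y + expo x z %[mod #[x]%g].
Proof.
move=> Hy Hz; apply/eqP; rewrite -eq_expg_mod_order expgD !expoP //.
by rewrite groupM.
Qed.

Local Open Scope group_scope.

Lemma mem_bs (gT : finGroupType) (bs : seq gT) (G : {group gT}) :
  \big[dprod/1]_(x <- bs) <[x]> = G -> forall x, x \in bs -> x \in G.
Proof.
elim: bs G => [|x0 bs IH] G //.
rewrite big_cons => defG x; case/dprodP: (defG) => [[_ H _ defH] defG' _ _]; rewrite defH in defG'.
rewrite inE => /orP[/eqP -> | Hx].
  by rewrite -defG'; apply: (subsetP (mulG_subl H _)); apply: cycle_id.
by rewrite -defG'; apply: (subsetP (mulG_subr <[x0]>%G _)); apply: IH Hx.
Qed.

Lemma homuniq (gT : finGroupType) (A : Type) (mul : A -> A -> A) (one : A)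
  (bs : seq gT) (G : {group gT}) :
  \big[dprod/1]_(x <- bs) <[x]> = G ->
  forall f g : gT -> A, f 1%g = one -> g 1%g = one ->
  (forall a b, a \in G -> b \in G -> f (a * b)%g = mul (f a) (f b)) ->
  (forall a b, a \in G -> b \in G -> g (a * b)%g = mul (g a) (g b)) ->
  (forall x, x \in bs -> f x = g x) ->
  forall a, a \in G -> f a = g a.
Proof.
elim: bs G => [|x0 bs IH] G.
  by rewrite big_nil => <- f g f1 g1 _ _ _ a; rewrite inE => /eqP ->; rewrite f1 g1.
rewrite big_cons => defG f g f1 g1 fM gM fg.
case/dprodP: (defG) => [[_ H _ defH] defG' _ _]; rewrite defH in defG'.
have sHG : H \subset G by rewrite -defG' mulG_subr.
have sxG : <[x0]>%g \subset G by rewrite -defG' mulG_subl.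
have IHH := IH H defH f g f1 g1 (fun a b Ha Hb => fM a b (subsetP sHG a Ha) (subsetP sHG b Hb))
  (fun a b Ha Hb => gM a b (subsetP sHG a Ha) (subsetP sHG b Hb))
  (fun x Hx => fg x (mem_behead (s := x0 :: bs) Hx)).
have x0G : x0 \in G by apply: (subsetP sxG); apply: cycle_id.
have Hpow : forall k, f (x0 ^+ k)%g = g (x0 ^+ k)%g.
  elim=> [|k IHk]; first by rewrite !expg0 f1 g1.
  by rewrite expgS fM ?gM ?groupX // IHk fg // mem_head.
move=> a; rewrite -defG' => /mulsgP[y h Hy Hh ->].
have yG : y \in G by apply: (subsetP sxG).
have hG : h \in G by apply: (subsetP sHG).
rewrite fM // gM // (IHH h Hh); case/cycleP: Hy => k ->; by rewrite Hpow.
Qed.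

Lemma mACA (A : Type) (mul : A -> A -> A) (P : A -> Prop)
  (PM : forall a b, P a -> P b -> P (mul a b))
  (mA : forall a b c, P a -> P b -> P c -> mul a (mul b c) = mul (mul a b) c)
  (mC : forall a b, P a -> P b -> mul a b = mul b a) a b c d :
  P a -> P b -> P c -> P d -> mul (mul a b) (mul c d) = mul (mul a c) (mul b d).
Proof.
move=> Pa Pb Pc Pd.
have -> : mul (mul a b) (mul c d) = mul a (mul b (mul c d)) by rewrite (mA a b) //; apply: PM.
have -> : mul (mul a c) (mul b d) = mul a (mul c (mul b d)) by rewrite (mA a c) //; apply: PM.
by congr (mul a _); rewrite (mA b c) // (mA c b) // (mC b c).
Qed.

Lemma homext (gT : finGroupType) (A : Type) (mul : A -> A -> A) (one : A) (P : A -> Prop)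
  (P1 : P one) (PM : forall a b, P a -> P b -> P (mul a b))
  (mA : forall a b c, P a -> P b -> P c -> mul a (mul b c) = mul (mul a b) c)
  (mC : forall a b, P a -> P b -> mul a b = mul b a)
  (m1 : forall a, P a -> mul one a = a)
  (bs : seq gT) (G : {group gT}) :
  \big[dprod/1]_(x <- bs) <[x]> = G ->
  forall v : gT -> A, (forall x, x \in bs -> P (v x) /\ mpow mul one (v x) #[x]%g = one) ->
  exists f : gT -> A, [/\ f 1%g = one, forall a, a \in G -> P (f a),
     forall a b, a \in G -> b \in G -> f (a * b)%g = mul (f a) (f b) &
     forall x, x \in bs -> f x = v x].
Proof.
elim: bs G => [|x0 bs IH] G.
  rewrite big_nil => <- v _; exists (fun _ => one); split=> //.
  by move=> a b _ _; rewrite m1.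
rewrite big_cons => defG v Hv.
case/dprodP: (defG) => [[_ H _ defH] defG' cH tiH]; rewrite defH in defG' cH tiH.
have [fK [fK1 PfK fKM fKv]] := IH H defH v (fun x Hx => Hv x (mem_behead (s := x0 :: bs) Hx)).
have [Pv0 Hv0] := Hv x0 (mem_head _ _).
set X := <[x0]>%g.
pose f a := mul (mpow mul one (v x0) (expo x0 (divgr X H a))) (fK (remgr X H a)).
have Hmp : forall k, P (mpow mul one (v x0) k) by move=> k; apply: P_mpow.
have fE : forall y h, y \in X -> h \in H ->
    f (y * h)%g = mul (mpow mul one (v x0) (expo x0 y)) (fK h).
  by move=> y h Hy Hh; rewrite /f divgrMid // remgrMid.
have Hmod : forall m, mpow mul one (v x0) m = mpow mul one (v x0) (m %% #[x0]%g).
  by move=> m; apply: (mpow_mod P1 PM mA m1).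
exists f; split.
- by rewrite -(mulg1 1%g) fE ?group1 // expo1 fK1 m1.
- by move=> a; rewrite -defG' => /mulsgP[y h Hy Hh ->]; rewrite fE //; apply: PM => //; apply: PfK.
- move=> a b; rewrite -defG' => /mulsgP[y h Hy Hh ->] /mulsgP[y' h' Hy' Hh' ->].
  have -> : (y * h * (y' * h') = (y * y') * (h * h'))%g.
    have cm : commute h y' by apply: (centsP cH).
    by rewrite -!mulgA (mulgA h) cm -!mulgA.
  rewrite !fE ?groupM // fKM //.
  have -> : mpow mul one (v x0) (expo x0 (y * y')) =
     mul (mpow mul one (v x0) (expo x0 y)) (mpow mul one (v x0) (expo x0 y')).
    by rewrite Hmod expoM // -Hmod (mpowD P1 PM mA m1).
  set p := mpow _ _ _ (expo x0 y); set p' := mpow _ _ _ (expo x0 y').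
  have Pp : P p by apply: Hmp. have Pp' : P p' by apply: Hmp.
  have Ph := PfK h Hh; have Ph' := PfK h' Hh'.
  exact: (mACA PM mA mC).
- move=> x; rewrite inE => /orP[/eqP -> | Hx].
  + rewrite -(mulg1 x0) fE ?group1 ?cycle_id // fK1 mulg1.
    have Hx1 : expo x0 x0 = 1 %[mod #[x0]%g].
      by apply/eqP; rewrite -eq_expg_mod_order expoP ?cycle_id.
    rewrite (mC _ one) // ?m1 // Hmod Hx1 -Hmod /= (mC _ one) // m1 //.
  + have xH : x \in H by apply: (mem_bs defH).
    rewrite -{1}(mul1g x) fE ?group1 // expo1 /= fKv // m1 //; by case: (Hv x (mem_behead (s:=x0::bs) Hx)).
Qed.

Local Close Scope group_scope.
Local Open Scope ring_scope.

Definition ishom (gT : finGroupType) (J : {set gT}) (f : gT -> algC) :=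
  f 1%g = 1 /\ forall a b, a \in J -> b \in J -> f (a * b)%g = f a * f b.

Lemma mpowC (a : algC) n : mpow *%R 1 a n = a ^+ n.
Proof. exact: iter_mulr_1. Qed.

Lemma homuniqC (gT : finGroupType) (bs : seq gT) (J : {group gT}) :
  \big[dprod/1%g]_(x <- bs) <[x]>%g = J -> forall f g, ishom J f -> ishom J g ->
  (forall x, x \in bs -> f x = g x) -> forall a, a \in J -> f a = g a.
Proof.
move=> dJ f g [f1 fM] [g1 gM] fg; exact: (homuniq (mul := *%R) dJ f1 g1 fM gM fg).
Qed.

Lemma homextC (gT : finGroupType) (bs : seq gT) (J : {group gT}) :
  \big[dprod/1%g]_(x <- bs) <[x]>%g = J -> forall v : gT -> algC,
  (forall x, x \in bs -> v x ^+ #[x]%g = 1) ->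
  exists f, [/\ ishom J f & forall x, x \in bs -> f x = v x].
Proof.
move=> dJ v Hv.
have Hv' : forall x, x \in bs -> True /\ mpow *%R 1 (v x) #[x]%g = 1.
  by move=> x Hx; split=> //; rewrite mpowC Hv.
have [f [f1 _ fM fv]] := homext (mul := *%R) (one := 1) (P := fun _ => True)
   I (fun _ _ _ _ => I) (fun a b c _ _ _ => mulrA a b c) (fun a b _ _ => mulrC a b)
   (fun a _ => mul1r a) dJ Hv'.
by exists f; split.
Qed.

Lemma hom_pow (gT : finGroupType) (J : {group gT}) f a n :
  ishom J f -> a \in J -> f (a ^+ n)%g = f a ^+ n.
Proof.
move=> [f1 fM] Ha; elim: n => [|n IH]; first by rewrite expg0 f1.
by rewrite expgS fM ?groupX // IH exprS.
Qed.

Lemma hom_norm (gT : finGroupType) (J : {group gT}) f a :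
  ishom J f -> a \in J -> `|f a| = 1.
Proof.
move=> hf Ha; have : f a ^+ #[a]%g = 1 by rewrite -(hom_pow _ hf Ha) expg_order; case: hf.
move/(congr1 (fun z => `|z|)); rewrite normrX normr1 => /eqP.
by rewrite pexpr_eq1 ?order_gt0 // => /eqP.
Qed.

Definition bichar (gT : finGroupType) (J : {set gT}) (w : gT -> gT -> algC) :=
  [/\ (forall j k, j \in J -> k \in J -> `|w j k| = 1),
      (forall j k k', j \in J -> k \in J -> k' \in J -> w j (k * k')%g = w j k * w j k')
    & (forall j j' k, j \in J -> j' \in J -> k \in J -> w (j * j')%g k = w j k * w j' k)].

Lemma norm1_neq0 (z : algC) : `|z| = 1 -> z != 0.
Proof. by move=> h; apply/eqP => z0; move: h; rewrite z0 normr0 => /eqP; rewrite eq_sym oner_eq0. Qed.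

Lemma idem1 (z : algC) : `|z| = 1 -> z = z * z -> z = 1.
Proof.
move=> h e; have nz := norm1_neq0 h.
by apply: (mulfI nz); rewrite mulr1 -e.
Qed.

Lemma bichar_homr (gT : finGroupType) (J : {group gT}) w j :
  bichar J w -> j \in J -> ishom J (w j).
Proof.
move=> [n r l] Hj; split; last by move=> a b Ha Hb; apply: r.
by apply: idem1; [apply: n | rewrite -r ?mulg1].
Qed.

Lemma bichar_homl (gT : finGroupType) (J : {group gT}) w k :
  bichar J w -> k \in J -> ishom J (fun j => w j k).
Proof.
move=> [n r l] Hk; split; last by move=> a b Ha Hb; apply: l.
by apply: idem1; [apply: n | rewrite -l ?mulg1].
Qed.

Lemma bichar_eq (gT : finGroupType) (bs : seq gT) (J : {group gT}) :
  \big[dprod/1%g]_(x <- bs) <[x]>%g = J -> forall w1 w2, bichar J w1 -> bichar J w2 ->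
  (forall x y, x \in bs -> y \in bs -> w1 x y = w2 x y) ->
  forall j k, j \in J -> k \in J -> w1 j k = w2 j k.
Proof.
move=> dJ w1 w2 b1 b2 e j k Hj Hk.
have ex : forall x, x \in bs -> w1 x k = w2 x k.
  move=> x Hx; have xJ := mem_bs dJ Hx.
  apply: (homuniqC dJ (bichar_homr b1 xJ) (bichar_homr b2 xJ)) => // y Hy; exact: e.
exact: (homuniqC dJ (bichar_homl b1 Hk) (bichar_homl b2 Hk)).
Qed.


Lemma ishom1 (gT : finGroupType) (J : {group gT}) : ishom J (fun _ => 1).
Proof. by split=> // a b _ _; rewrite mulr1. Qed.

Lemma ishomM (gT : finGroupType) (J : {group gT}) f g :
  ishom J f -> ishom J g -> ishom J (fun a => f a * g a).
Proof.
move=> [f1 fM] [g1 gM]; split; first by rewrite f1 g1 mulr1.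
by move=> a b Ha Hb; rewrite fM // gM // mulrACA.
Qed.

Lemma bichar_mk (gT : finGroupType) (bs : seq gT) (J : {group gT}) :
  \big[dprod/1%g]_(x <- bs) <[x]>%g = J -> forall M : gT -> gT -> algC,
  (forall x y, x \in bs -> y \in bs -> M x y ^+ #[x]%g = 1 /\ M x y ^+ #[y]%g = 1) ->
  exists w, bichar J w /\ forall x y, x \in bs -> y \in bs -> w x y = M x y.
Proof.
move=> dJ M HM.
have hchi : forall y, exists chi, ishom J chi /\
    forall x, x \in bs -> chi x = (if y \in bs then M x y else 1).
  move=> y; have [|f [hf fv]] := homextC dJ (v := fun x => if y \in bs then M x y else 1).
    by move=> x Hx; case: ifP => Hy; [case: (HM x y Hx Hy) | rewrite expr1n].
  by exists f.
pose chi y := proj1_sig (constructive_indefinite_description _ (hchi y)).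
have chiP : forall y, ishom J (chi y) /\
    forall x, x \in bs -> chi y x = (if y \in bs then M x y else 1).
  by move=> y; exact: (proj2_sig (constructive_indefinite_description _ (hchi y))).
have hw : forall j, exists f, ishom J f /\
    forall y, y \in bs -> f y = (if j \in J then chi y j else 1).
  move=> j; have [|f [hf fv]] := homextC dJ (v := fun y => if j \in J then chi y j else 1).
    move=> y Hy; case: ifP => Hj; last by rewrite expr1n.
    have hp : ishom J (fun a => chi y a ^+ #[y]%g).
      have [[c1 cM] _] := chiP y.
      by split; [rewrite c1 expr1n | move=> a b Ha Hb; rewrite cM // exprMn].
    apply: (homuniqC dJ hp (ishom1 J)) => // x Hx.
    by have [_ ->] := chiP y; rewrite // Hy; case: (HM x y Hx Hy).
  by exists f.
pose w j := proj1_sig (constructive_indefinite_description _ (hw j)).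
have wP : forall j, ishom J (w j) /\
    forall y, y \in bs -> w j y = (if j \in J then chi y j else 1).
  by move=> j; exact: (proj2_sig (constructive_indefinite_description _ (hw j))).
exists w; split; last first.
  move=> x y Hx Hy; have [_ ->] := wP x; rewrite // (mem_bs dJ Hx).
  by have [_ ->] := chiP y; rewrite // Hy.
split.
- by move=> j k Hj Hk; apply: (hom_norm (J := J)) => //; case: (wP j).
- by move=> j k k' Hj Hk Hk'; have [[_ wM] _] := wP j; apply: wM.
- move=> j j' k Hj Hj' Hk.
  apply: (homuniqC dJ (f := w (j * j')%g) (g := fun k => w j k * w j' k)) => //.
  + by case: (wP (j * j')%g).
  + by apply: ishomM; [case: (wP j) | case: (wP j')].
  move=> y Hy; rewrite !(proj2 (wP _) y Hy) Hj Hj' groupM //.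
  have [[_ cM] _] := chiP y; exact: cM.
Qed.

Lemma bichar_mul (gT : finGroupType) (J : {group gT}) w1 w2 :
  bichar J w1 -> bichar J w2 -> bichar J (fun j k => w1 j k * w2 j k).
Proof.
move=> [n1 r1 l1] [n2 r2 l2]; split.
- by move=> j k Hj Hk; rewrite normrM n1 // n2 // mulr1.
- by move=> j k k' Hj Hk Hk'; rewrite r1 // r2 // mulrACA.
- by move=> j j' k Hj Hj' Hk; rewrite l1 // l2 // mulrACA.
Qed.

Lemma bichar_tr (gT : finGroupType) (J : {group gT}) w :
  bichar J w -> bichar J (fun j k => w k j).
Proof. by move=> [n r l]; split=> *; [apply: n | apply: l | apply: r]. Qed.

Lemma bichar_V (gT : finGroupType) (J : {group gT}) w :
  bichar J w -> bichar J (fun j k => (w j k)^-1).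
Proof.
move=> [n r l]; split.
- by move=> j k Hj Hk; rewrite normfV n // invr1.
- by move=> j k k' Hj Hk Hk'; rewrite r // invfM.
- by move=> j j' k Hj Hj' Hk; rewrite l // invfM.
Qed.

Lemma bichar1 (gT : finGroupType) (J : {group gT}) : bichar J (fun _ _ => 1).
Proof. by split=> *; rewrite ?normr1 ?mulr1. Qed.

Lemma quad_eq (gT : finGroupType) (bs : seq gT) (J : {group gT}) :
  \big[dprod/1%g]_(x <- bs) <[x]>%g = J -> forall (f g : gT -> algC) (c : gT -> gT -> algC),
  f 1%g = 1 -> g 1%g = 1 -> (forall a, a \in J -> g a != 0) ->
  (forall a b, a \in J -> b \in J -> c a b != 0) ->
  (forall a b, a \in J -> b \in J -> f (a * b)%g = f a * f b * c a b) ->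
  (forall a b, a \in J -> b \in J -> g (a * b)%g = g a * g b * c a b) ->
  (forall x, x \in bs -> f x = g x) -> forall a, a \in J -> f a = g a.
Proof.
move=> dJ f g c f1 g1 gnz cnz fM gM fg a Ha.
have hh : ishom J (fun a => f a / g a).
  split; first by rewrite f1 g1 divr1.
  move=> x y Hx Hy; rewrite fM // gM //.
  have := gnz x Hx; have := gnz y Hy; have := cnz x y Hx Hy => *; field.
  by apply/and3P.
have e : f a / g a = 1.
  apply: (homuniqC dJ hh (ishom1 J)) => // x Hx.
  by rewrite fg // mulfV // gnz // (mem_bs dJ Hx).
by rewrite -[f a](divfK (gnz a Ha)) e mul1r.
Qed.


Lemma conj_norm1 (z : algC) : `|z| = 1 -> z^* = z^-1.
Proof.
move=> h; have nz := norm1_neq0 h.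
have e : z * z^* = 1 by rewrite -normCK h expr1n.
by rewrite -[z^*]mul1r -(mulVf nz) -mulrA e mulr1.
Qed.

Definition qf (Phi : finType) (o : Phi) (T : Phi -> Phi -> algC)
    (gT : finGroupType) (cur : gT -> Phi) (j : gT) : algC :=
  T (cur j) (cur j) * (T o o)^*.

Lemma md_facts (Phi : finType) (o : Phi) (S T : Phi -> Phi -> algC)
    (gT : finGroupType) (cur : gT -> Phi) :
  sc_modular_data o S T cur ->
  [/\ (forall j k, QJ o S cur j k = QJ o S cur k j),
      (forall j k k', QJ o S cur j (k * k')%g = QJ o S cur j k * QJ o S cur j k'),
      (forall j j' k, QJ o S cur (j * j')%g k = QJ o S cur j k * QJ o S cur j' k),
      (forall j k, `|QJ o S cur j k| = 1) &
   [/\ (forall j k, qf o T cur (j * k)%g = qf o T cur j * qf o T cur k / QJ o S cur j k),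
      qf o T cur 1%g = 1,
      (forall j, `|qf o T cur j| = 1) &
      (forall j, QJ o S cur j j * qf o T cur j ^+ 2 = 1)]].
Proof.
move=> [[ab _ c1 _ _] [Tn Qm QT Tinv]].
set th := fun j => T (cur j) (cur j).
have thn : forall j, th j != 0 by move=> j; apply: norm1_neq0; apply: Tn.
have th1 : th 1%g = T o o by rewrite /th c1.
have t0n : T o o != 0 by apply: norm1_neq0; apply: Tn.
have cj : (T o o)^* = (T o o)^-1 by apply: conj_norm1; apply: Tn.
have QTh : forall j k, QJ o S cur j k = th j * th k / (th (j * k)%g * T o o) by [].
have comm : forall j k : gT, (j * k = k * j)%g.
  by move=> j k; apply: (centsP ab); rewrite inE.
have Qs : forall j k, QJ o S cur j k = QJ o S cur k j.
  by move=> j k; rewrite !QTh (comm j k) (mulrC (th j)).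
have Qr : forall j k k', QJ o S cur j (k * k')%g = QJ o S cur j k * QJ o S cur j k'.
  by move=> j k k'; rewrite /QJ Qm.
have Q1 : forall j, QJ o S cur j 1%g = 1.
  move=> j; rewrite QTh mulg1 th1 divff // mulf_neq0 //.
split=> //.
- by move=> j j' k; rewrite Qs Qr Qs (Qs k j').
- move=> j k; rewrite QTh !normrM normfV normrM.
  by rewrite /th !Tn !mul1r invr1.
split.
- move=> j k; rewrite QTh /qf -/(th _) -/(th j) -/(th k) cj.
  have := thn j; have := thn k; have := thn (j * k)%g => *; field.
  by apply/and4P; split.
- by rewrite /qf c1 cj divff.
- by move=> j; rewrite /qf normrM Tn cj normfV Tn invr1 mulr1.
- move=> j.
  have e1 : QJ o S cur j j * QJ o S cur j j^-1%g = 1 by rewrite -Qr mulgV Q1.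
  have e2 : QJ o S cur j j^-1%g = th j ^+ 2 / (T o o) ^+ 2.
    rewrite QTh mulgV th1 /th Tinv -/(th j).
    have := thn j => *; field; exact: t0n.
  rewrite /qf -/(th j) cj; rewrite e2 in e1; rewrite -e1.
  have := thn j => *; field; exact: t0n.
Qed.


Lemma Nm1_neq1 : (-1 : algC) != 1.
Proof. by rewrite -subr_eq0 -opprD oppr_eq0 -mulr2n pnatr_eq0. Qed.

Lemma expNm1 (n : nat) : odd n -> (-1 : algC) ^+ n = -1.
Proof. by move=> h; rewrite -signr_odd h expr1. Qed.

Lemma qf_pow (Phi : finType) (o : Phi) (S T : Phi -> Phi -> algC)
    (gT : finGroupType) (cur : gT -> Phi) :
  sc_modular_data o S T cur -> forall (x : gT) m,
  qf o T cur (x ^+ m)%g = qf o T cur x ^+ (m * m).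
Proof.
move=> H x; have [Qs Qr Ql Qn [qM q1 qn Qq]] := md_facts H.
have qnz : (qf o T cur) x != 0 by apply: norm1_neq0.
have QxX : forall m, (QJ o S cur) x (x ^+ m)%g = (QJ o S cur) x x ^+ m.
  elim=> [|m IH]; last by rewrite expgS Qr IH exprS.
  rewrite expg0 expr0; apply: idem1; first exact: Qn.
  by rewrite -Qr mulg1.
have Qxx : (QJ o S cur) x x = ((qf o T cur) x ^+ 2)^-1.
  by apply: (mulIf (expf_neq0 2 qnz)); rewrite Qq mulVf // expf_neq0.
elim=> [|m IH]; first by rewrite expg0 q1 expr0.
rewrite expgS qM IH QxX Qxx exprVn invrK -!exprM -exprS -exprD; congr (_ ^+ _).
lia.
Qed.

Lemma noquat_pow (Phi : finType) (o : Phi) (S T : Phi -> Phi -> algC)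
    (gT : finGroupType) (cur : gT -> Phi) (J : {group gT}) :
  sc_modular_data o S T cur ->
  (forall j, j \in J -> ~~ quaternionic o S cur j) ->
  forall x, x \in J -> qf o T cur x ^+ #[x]%g = 1.
Proof.
move=> H noq x Hx; have [Qs Qr Ql Qn [qM q1 qn Qq]] := md_facts H.
have QxX : forall x m, (QJ o S cur) x (x ^+ m)%g = (QJ o S cur) x x ^+ m.
  move=> z; elim=> [|m IH]; last by rewrite expgS Qr IH exprS.
  rewrite expg0 expr0; apply: idem1; first exact: Qn.
  by rewrite -Qr mulg1.
have Qord : forall z, (QJ o S cur) z z ^+ #[z]%g = 1.
  move=> z; rewrite -QxX expg_order; apply: idem1; first exact: Qn.
  by rewrite -Qr mulg1.
set n := #[x]%g.
have n0 : (0 < n)%N by apply: order_gt0.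
have h2n : (qf o T cur) x ^+ (n * 2) = 1.
  have := Qq x => /(congr1 (fun z => z ^+ n)); rewrite expr1n exprMn Qord mul1r.
  by rewrite -exprM mulnC.
apply/eqP/negPn/negP => hn.
have hm1 : (qf o T cur) x ^+ n = -1.
  have : ((qf o T cur) x ^+ n) ^+ 2 == 1 by rewrite -exprM h2n.
  by rewrite sqrf_eq1 (negPf hn) /= => /eqP.
set m := (n`_(2^'))%N; set k := (n`_2)%N.
have nkm : (k * m)%N = n by rewrite /k /m partnC.
have modd : odd m by rewrite odd_2'nat part_pnat.
have mdn : (m %| n)%N by rewrite -nkm dvdn_mull.
set y := (x ^+ m)%g.
have yJ : y \in J by apply: groupX.
have oy : #[y]%g = k by rewrite /y orderXdiv // -/n -nkm mulnK // (dvdn_gt0 n0 mdn).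
have qy : (qf o T cur) y = (qf o T cur) x ^+ (m * m) by exact: (qf_pow H x m).
have qyk : (qf o T cur) y ^+ k = -1.
  by rewrite qy -exprM -mulnA (mulnC m k) nkm mulnC exprM hm1 expNm1.
have k0 : (0 < k)%N by rewrite -oy order_gt0.
have keven : ~~ odd k.
  apply/negP => ko.
  have : (qf o T cur) y ^+ (k * k) = 1.
    by rewrite -(qf_pow H) /y -expgM (mulnC m k) nkm /n expg_order q1.
  by rewrite exprM qyk expNm1 //; apply/eqP; exact: Nm1_neq1.
set a := logn 2 n.
have ka : k = (2 ^ a)%N by rewrite /k p_part.
have a0 : (0 < a)%N by move: keven; rewrite ka; case: (a) => //.
have Qyk : (QJ o S cur) y y ^+ k = 1.
  have := Qq y => /(congr1 (fun z => z ^+ k)); rewrite expr1n exprMn.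
  by rewrite -exprM mulnC exprM qyk -signr_odd /= mulr1.
have prim : k.-primitive_root ((QJ o S cur) y y).
  have [d pd dk] := prim_order_exists k0 Qyk.
  move: dk; rewrite ka => /(dvdn_pfactor _ _ (isT : prime 2)) [b ba db].
  have [eab | nab] := eqVneq b a; first by rewrite -eab -db.
  have dh : (d %| 2 ^ a.-1)%N.
    by rewrite db dvdn_exp2l // -ltnS prednK // ltn_neqAle nab ba.
  move: dh; rewrite (prim_order_dvd pd) => /eqP Qh.
  have := Qq y => /(congr1 (fun z => z ^+ (2 ^ a.-1)%N)); rewrite expr1n exprMn Qh mul1r.
  rewrite -exprM -expnS prednK // -ka qyk => h.
  by move: Nm1_neq1; rewrite h eqxx.
have := noq y yJ; rewrite /quaternionic oy prim keven.
by [].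
Qed.


Lemma eps_noquat (Phi : finType) (o : Phi) (S T : Phi -> Phi -> algC)
    (gT : finGroupType) (cur : gT -> Phi) (J : {group gT}) eps :
  eps_ok o S T cur J eps -> forall j, j \in J -> ~~ quaternionic o S cur j.
Proof.
move=> [n r l c4 c5] j Hj.
have be : bichar J eps by split.
have ej : eps j j ^+ #[j]%g = 1.
  rewrite -(hom_pow _ (bichar_homl be Hj) Hj) expg_order.
  by case: (bichar_homl be Hj).
have Qj : QJ o S cur j j * eps j j ^+ 2 = 1 by rewrite expr2 mulrA c4.
apply/negP => /andP[pr ev].
set N := #[j]%g in ej pr ev.
have N0 : (0 < N)%N by apply: order_gt0.
have NE : N = (N./2 * 2)%N by rewrite -[LHS]odd_double_half (negPf ev) add0n -muln2.
have h0 : (0 < N./2)%N by move: N0; rewrite NE; case: (N./2).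
have hlt : (N./2 < N)%N by rewrite {2}NE; lia.
have := prim_order_dvd pr N./2; rewrite gtnNdvd // => /esym/negbT/eqP h; apply: h.
have enz : eps j j != 0 by apply: norm1_neq0; apply: n.
have : QJ o S cur j j = (eps j j ^+ 2)^-1.
  by apply: (mulIf (expf_neq0 2 enz)); rewrite Qj mulVf // expf_neq0.
move=> ->; by rewrite exprVn -exprM mulnC -NE ej invr1.
Qed.

Lemma Q_bichar (Phi : finType) (o : Phi) (S T : Phi -> Phi -> algC)
    (gT : finGroupType) (cur : gT -> Phi) (J : {group gT}) :
  sc_modular_data o S T cur -> bichar J (QJ o S cur).
Proof. by move=> H; have [Qs Qr Ql Qn _] := md_facts H; split. Qed.

Lemma bichar_pow_eq1 (gT : finGroupType) (J : {group gT}) w x y :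
  bichar J w -> x \in J -> y \in J -> w x y ^+ #[x]%g = 1 /\ w x y ^+ #[y]%g = 1.
Proof.
move=> bw Hx Hy; split.
  rewrite -(hom_pow _ (bichar_homl bw Hy) Hx) expg_order.
  by case: (bichar_homl bw Hy).
rewrite -(hom_pow _ (bichar_homr bw Hx) Hy) expg_order.
by case: (bichar_homr bw Hx).
Qed.

Lemma index_eq_bs (T : eqType) (bs : seq T) x y :
  x \in bs -> index x bs = index y bs -> x = y.
Proof.
move=> Hx e; have Hy : y \in bs by rewrite -index_mem -e index_mem.
by rewrite -(nth_index x Hx) e nth_index.
Qed.

Lemma part1_exists (Phi : finType) (o : Phi) (S T : Phi -> Phi -> algC)
    (gT : finGroupType) (cur : gT -> Phi) (J : {group gT}) (bs : seq gT) :
  sc_modular_data o S T cur ->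
  \big[dprod/1%g]_(x <- bs) <[x]>%g = J ->
  (forall j, j \in J -> ~~ quaternionic o S cur j) ->
  exists eps, eps_ok o S T cur J eps.
Proof.
move=> H dJ noq; have [Qs Qr Ql Qn [qM q1 qn Qq]] := md_facts H.
have bQ := Q_bichar J H.
pose M x y := if (index x bs < index y bs)%N then (QJ o S cur x y)^-1
              else if x == y then qf o T cur x else 1.
have [|eps [be eM]] := bichar_mk dJ (M := M).
  move=> x y Hx Hy; have xJ := mem_bs dJ Hx; have yJ := mem_bs dJ Hy.
  rewrite /M; case: ifP => _.
    by have [h1 h2] := bichar_pow_eq1 bQ xJ yJ; rewrite !exprVn h1 h2 invr1.
  case: eqP => [<- | _]; last by rewrite !expr1n.
  by rewrite (noquat_pow H noq xJ).
have Qnz : forall j k, QJ o S cur j k != 0 by move=> j k; apply: norm1_neq0.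
have c4 : forall j j', j \in J -> j' \in J -> QJ o S cur j j' * eps j j' * eps j' j = 1.
  have b1 : bichar J (fun j k => QJ o S cur j k * eps j k * eps k j).
    by apply: bichar_mul; [apply: bichar_mul | apply: bichar_tr].
  move=> j j' Hj Hj'; apply: (bichar_eq dJ b1 (bichar1 J)) => // x y Hx Hy.
  rewrite !eM // /M.
  have [lt|gt|eq] := ltngtP (index x bs) (index y bs).
  - have ne : (y == x) = false by apply/eqP => e; move: lt; rewrite e ltnn.
    by rewrite ne mulr1 mulfV.
  - have ne : (x == y) = false by apply/eqP => e; move: gt; rewrite e ltnn.
    by rewrite ne mulr1 Qs mulfV.
  - have e := index_eq_bs Hx eq; subst y.
    by rewrite eqxx -mulrA -expr2 Qq.
exists eps; have [bn br bl] := be; split=> //.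
have key : forall a, a \in J -> eps a a = qf o T cur a.
apply: (quad_eq dJ (f := fun j => eps j j) (g := qf o T cur)
   (c := fun a b => (QJ o S cur a b)^-1)).
- by have [-> _] := bichar_homl be (group1 J).
- exact: q1.
- by move=> a _; apply: norm1_neq0.
- by move=> a b _ _; rewrite invr_eq0.
- move=> a b Ha Hb; rewrite br ?groupM // !bl //.
  have := c4 a b Ha Hb => e.
  have -> : (QJ o S cur a b)^-1 = eps a b * eps b a.
    by apply: (mulfI (Qnz a b)); rewrite mulfV // mulrA e.
  ring.
- by move=> a b _ _; rewrite qM.
- by move=> x Hx; rewrite eM // /M ltnn eqxx.
by move=> j Hj; rewrite key.
Qed.


Ltac fnz := field; repeat (apply/andP; split); try assumption; rewrite ?mulf_neq0 //.

Definition cm (gT : finGroupType) (w : gT -> gT -> algC) a b := w a b / w b a.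

Lemma bichar_cocycle (gT : finGroupType) (J : {group gT}) w :
  bichar J w -> cocycle2 J w.
Proof.
move=> [n r l]; split=> // a b c Ha Hb Hc.
by rewrite r // l //; ring.
Qed.

Lemma cohom_comm (gT : finGroupType) (J : {group gT}) w w' :
  abelian [set: gT] -> cocycle2 J w -> cohomologous J w w' ->
  forall a b, a \in J -> b \in J -> cm w' a b = cm w a b.
Proof.
move=> ab [wn _] [beta [bn bw]] a b Ha Hb.
have comm : (a * b = b * a)%g by apply: (centsP ab); rewrite inE.
rewrite /cm !bw // comm.
have := norm1_neq0 (wn a b Ha Hb); have := norm1_neq0 (wn b a Hb Ha).
have := norm1_neq0 (bn a Ha); have := norm1_neq0 (bn b Hb).
have := norm1_neq0 (bn _ (groupM Hb Ha)) => *.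
by fnz.
Qed.

Lemma cm_bichar (gT : finGroupType) (J : {group gT}) w :
  abelian [set: gT] -> cocycle2 J w -> bichar J (cm w).
Proof.
move=> ab [wn wc].
have comm : forall a b : gT, (a * b = b * a)%g by move=> a b; apply: (centsP ab); rewrite inE.
have nz : forall a b, a \in J -> b \in J -> w a b != 0 by move=> a b Ha Hb; apply: norm1_neq0; apply: wn.
have key : forall a b c, a \in J -> b \in J -> c \in J ->
    cm w (a * b)%g c = cm w a c * cm w b c.
  move=> a b c Ha Hb Hc; rewrite /cm.
  have E1 : w (a * b)%g c = w b c * w a (b * c)%g / w a b.
    by rewrite wc // mulfK // nz.
  have E2 : w c (a * b)%g = w (c * a)%g b * w c a / w a b.
    by rewrite -wc // (mulrC (w a b)) mulfK // nz.
  have E3 : w a (b * c)%g = w (a * c)%g b * w a c / w c b.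
    by rewrite (comm b c) -wc // (mulrC (w c b)) mulfK // nz.
  rewrite E1 E2 E3 (comm c a).
  have := nz a b Ha Hb; have := nz c b Hc Hb; have := nz a c Ha Hc.
  have := nz c a Hc Ha; have := nz b c Hb Hc; have := nz (a * c)%g b (groupM Ha Hc) Hb.
  by move=> *; fnz.
split.
- by move=> j k Hj Hk; rewrite /cm normf_div !wn // divr1.
- move=> j k k' Hj Hk Hk'.
  have inv : forall a b, a \in J -> b \in J -> cm w a b = (cm w b a)^-1.
    by move=> a b Ha Hb; rewrite /cm invf_div.
  by rewrite inv ?groupM // key // invfM -!inv.
- by move=> j j' k Hj Hj' Hk; apply: key.
Qed.


Lemma sym_cobound (gT : finGroupType) (J : {group gT}) (bs : seq gT) w w' :
  abelian [set: gT] -> \big[dprod/1%g]_(x <- bs) <[x]>%g = J ->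
  cocycle2 J w -> cocycle2 J w' ->
  (forall a b, a \in J -> b \in J -> cm w a b = cm w' a b) ->
  cohomologous J w w'.
Proof.
move=> ab dJ [wn wc] [wn' wc'] ecm.
have comm : forall a b : gT, (a * b = b * a)%g by move=> a b; apply: (centsP ab); rewrite inE.
have wnz : forall a b, a \in J -> b \in J -> w a b != 0 by move=> a b Ha Hb; apply: norm1_neq0; apply: wn.
have wnz' : forall a b, a \in J -> b \in J -> w' a b != 0 by move=> a b Ha Hb; apply: norm1_neq0; apply: wn'.
pose u a b := w' a b / w a b.
have un : forall a b, a \in J -> b \in J -> `|u a b| = 1.
  by move=> a b Ha Hb; rewrite normf_div wn // wn' // divr1.
have unz : forall a b, a \in J -> b \in J -> u a b != 0 by move=> a b Ha Hb; apply: norm1_neq0; apply: un.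
have uc : forall a b c, a \in J -> b \in J -> c \in J ->
    u b c * u a (b * c)%g = u (a * b)%g c * u a b.
  move=> a b c Ha Hb Hc; rewrite /u.
  by rewrite !mulf_div wc' // wc //.
have us : forall a b, a \in J -> b \in J -> u a b = u b a.
  move=> a b Ha Hb; have := ecm a b Ha Hb; rewrite /cm /u => e.
  have e2 : w' a b = w a b / w b a * w' b a by rewrite e divfK // wnz'.
  rewrite e2.
  have := wnz a b Ha Hb; have := wnz b a Hb Ha; have := wnz' b a Hb Ha => *.
  by fnz.
have u1 : forall b, b \in J -> u 1%g b = u 1%g 1%g.
  move=> b Hb; have := uc 1%g 1%g b (group1 J) (group1 J) Hb.
  by rewrite !mul1g => /(mulfI (unz _ _ (group1 J) Hb)).
pose mul (p q : algC * gT) := (p.1 * q.1 / u p.2 q.2, (p.2 * q.2)%g).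
pose one : algC * gT := (u 1%g 1%g, 1%g).
pose P (p : algC * gT) := p.2 \in J.
have P1 : P one by rewrite /P /= group1.
have PM : forall p q, P p -> P q -> P (mul p q) by move=> p q; rewrite /P /=; apply: groupM.
have mA : forall p q r, P p -> P q -> P r -> mul p (mul q r) = mul (mul p q) r.
  move=> [s a] [t b] [r c]; rewrite /P /mul /= => Ha Hb Hc; congr (_, _); last by rewrite mulgA.
  have := uc a b c Ha Hb Hc => e.
  have := unz _ _ Ha (groupM Hb Hc); have := unz _ _ Hb Hc.
  have := unz _ _ (groupM Ha Hb) Hc; have := unz _ _ Ha Hb => *.
  have e2 : u a (b * c)%g = u (a * b)%g c * u a b / u b c by rewrite -e (mulrC (u b c)) mulfK.
  by rewrite e2; fnz.
have mC : forall p q, P p -> P q -> mul p q = mul q p.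
  by move=> [s a] [t b]; rewrite /P /mul /= => Ha Hb; rewrite us // (comm a b) (mulrC s t).
have m1 : forall p, P p -> mul one p = p.
  move=> [t b]; rewrite /P /mul /= => Hb; rewrite mul1g u1 // (mulrC (u 1%g 1%g)) mulfK //.
  by apply: unz; rewrite ?group1.
have mpF : forall x n t, mpow mul one (t, x) n = (t ^+ n * (mpow mul one (1, x) n).1, (x ^+ n)%g).
  move=> x; elim=> [|n IH] t; first by rewrite /= mul1r.
  change (mul (t, x) (mpow mul one (t, x) n) =
    (t ^+ n.+1 * (mul (1, x) (mpow mul one (1, x) n)).1, (x ^+ n.+1)%g)).
  have h1 : mpow mul one (1, x) n = ((mpow mul one (1, x) n).1, (x ^+ n)%g).
    by rewrite [LHS](IH 1) expr1n mul1r.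
  rewrite (IH t) [in RHS]h1 /mul /= expgS !mul1r exprS; congr (_, _).
  by rewrite !mulrA.
have cn : forall x n, x \in J -> `|(mpow mul one (1, x) n).1| = 1.
  move=> x n Hx; elim: n => [|n IH]; first by rewrite /= un ?group1.
  change (`|(mul (1, x) (mpow mul one (1, x) n)).1| = 1).
  rewrite [mpow _ _ _ n]mpF /mul /= expr1n !mul1r in IH *.
  by rewrite normf_div IH un ?groupX // divr1.
pose c x := (mpow mul one (1, x) #[x]%g).1.
pose t x := #[x]%g.-root (u 1%g 1%g / c x).
have Hv : forall x, x \in bs -> P (t x, x) /\ mpow mul one (t x, x) #[x]%g = one.
  move=> x Hx; have xJ := mem_bs dJ Hx; split => //.
  rewrite mpF rootCK ?order_gt0 // expg_order divfK //.
  by apply: norm1_neq0; apply: cn.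
have [f [f1 Pf fM fv]] := homext (A := (algC * gT)%type) (mul := mul) (one := one) (P := fun p => is_true (P p)) P1 PM mA mC m1 dJ Hv.
have sig : forall a, a \in J -> (f a).2 = a.
  apply: (homuniq (mul := fun a b : gT => (a * b)%g) dJ (f := fun a => (f a).2) (g := id)).
  - by rewrite f1.
  - by [].
  - by move=> a b Ha Hb; rewrite fM.
  - by [].
  - by move=> x Hx; rewrite fv.
have fM1 : forall a b, a \in J -> b \in J -> (f (a * b)%g).1 = (f a).1 * (f b).1 / u a b.
  by move=> a b Ha Hb; rewrite fM // /mul /= !sig.
have fn : forall a, a \in J -> `|(f a).1| = 1.
  have hg : ishom J (fun a => `|(f a).1|).
    split; first by rewrite f1 /= un ?group1.
    by move=> a b Ha Hb; rewrite fM1 // normf_div normrM un // divr1.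
  apply: (homuniqC dJ hg (ishom1 J)) => x Hx /=.
  rewrite fv //= /t norm_rootC normf_div un ?(mem_bs dJ Hx) // cn ?(mem_bs dJ Hx) //.
  by rewrite divr1 rootC1 // order_gt0.
exists (fun a => (f a).1); split=> // a b Ha Hb.
rewrite fM1 //.
have := norm1_neq0 (fn a Ha); have := norm1_neq0 (fn b Hb); have := unz a b Ha Hb.
have := wnz a b Ha Hb => *.
rewrite /u; fnz; exact: wnz'.
Qed.


Lemma eps_bichar (Phi : finType) (o : Phi) (S T : Phi -> Phi -> algC)
    (gT : finGroupType) (cur : gT -> Phi) (J : {group gT}) e :
  eps_ok o S T cur J e -> bichar J e.
Proof. by case. Qed.

Lemma part2 (Phi : finType) (o : Phi) (S T : Phi -> Phi -> algC)
    (gT : finGroupType) (cur : gT -> Phi) (J : {group gT}) (bs : seq gT) :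
  sc_modular_data o S T cur ->
  \big[dprod/1%g]_(x <- bs) <[x]>%g = J ->
  (forall j, j \in J -> ~~ quaternionic o S cur j) ->
  eps_H2_bijection o S T cur J.
Proof.
move=> H dJ noq; have [[ab _ _ _ _] _] := H.
have [eps0 ok0] := part1_exists H dJ noq.
have b0 := eps_bichar ok0.
have e0nz : forall a b, a \in J -> b \in J -> eps0 a b != 0.
  by move=> a b Ha Hb; apply: norm1_neq0; case: b0 => n _ _; apply: n.
pose d (e : gT -> gT -> algC) a b := e a b / eps0 a b.
have bd : forall e, eps_ok o S T cur J e -> bichar J (d e).
  by move=> e ok; apply: bichar_mul (eps_bichar ok) (bichar_V b0).
have dalt : forall e, eps_ok o S T cur J e -> forall a b, a \in J -> b \in J ->
    d e a b * d e b a = 1.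
  move=> e [_ _ _ c4 _] a b Ha Hb; have [_ _ _ c40 _] := ok0.
  have Qnz : QJ o S cur a b != 0.
    by apply: norm1_neq0; have [_ _ _ Qn _] := md_facts H; apply: Qn.
  have h : e a b * e b a = eps0 a b * eps0 b a.
    by apply: (mulfI Qnz); rewrite !mulrA c4 // c40.
  by rewrite /d mulf_div h divff // mulf_neq0 // e0nz.
have ddiag : forall e, eps_ok o S T cur J e -> forall a, a \in J -> d e a a = 1.
  move=> e [_ _ _ _ c5] a Ha; have [_ _ _ _ c50] := ok0.
  by rewrite /d c5 // -c50 // divff // e0nz.
pose Mf e x y := if (index x bs < index y bs)%N then d e x y else 1.
pose Pf e w := bichar J w /\ forall x y, x \in bs -> y \in bs -> w x y = Mf e x y.
pose F e := epsilon (inhabits (fun _ _ : gT => (0 : algC))) (Pf e).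
have FP : forall e, eps_ok o S T cur J e -> Pf e (F e).
  move=> e ok; apply: epsilon_spec.
  apply: (bichar_mk dJ (M := Mf e)) => x y Hx Hy; rewrite /Mf; case: ifP => _.
    by apply: bichar_pow_eq1; [apply: bd | apply: (mem_bs dJ Hx) | apply: (mem_bs dJ Hy)].
  by rewrite !expr1n.
have Fcm : forall e, eps_ok o S T cur J e -> forall a b, a \in J -> b \in J ->
    cm (F e) a b = d e a b.
  move=> e ok; have [bF FM] := FP e ok.
  apply: (bichar_eq dJ (cm_bichar ab (bichar_cocycle bF)) (bd e ok)) => x y Hx Hy.
  have xJ := mem_bs dJ Hx; have yJ := mem_bs dJ Hy.
  rewrite /cm !FM // /Mf.
  have [lt|gt|eq] := ltngtP (index x bs) (index y bs).
  - by rewrite divr1.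
  - have nz : d e y x != 0 by apply: norm1_neq0; case: (bd e ok) => n _ _; apply: n.
    by rewrite -(dalt e ok x y xJ yJ) mulfK.
  - have e' := index_eq_bs Hx eq; subst y.
    by rewrite divr1 ddiag.
exists F; split.
- by move=> e ok; apply: bichar_cocycle; case: (FP e ok).
- move=> e e' ok ok' eq; apply: (sym_cobound ab dJ).
  + by apply: bichar_cocycle; case: (FP e ok).
  + by apply: bichar_cocycle; case: (FP e' ok').
  by move=> a b Ha Hb; rewrite !Fcm // /d eq.
- move=> e e' ok ok' co j k Hj Hk.
  have := cohom_comm ab (bichar_cocycle (proj1 (FP e ok))) co Hj Hk.
  rewrite !Fcm // /d => h.
  by apply: (mulIf (invr_neq0 (e0nz j k Hj Hk))); rewrite h.
- move=> w cw.
  have [wn wc] := cw.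
  have wnz : forall a b, a \in J -> b \in J -> w a b != 0.
    by move=> a b Ha Hb; apply: norm1_neq0; apply: wn.
  pose e a b := eps0 a b * cm w a b.
  have be : bichar J e by apply: bichar_mul => //; apply: cm_bichar.
  have ok : eps_ok o S T cur J e.
    have [n r l] := be; have [_ _ _ c40 c50] := ok0; split=> //.
    + move=> j j' Hj Hj'.
      have h : cm w j j' * cm w j' j = 1.
        by rewrite /cm mulf_div (mulrC (w j' j)) mulfV // mulf_neq0 // wnz.
      rewrite /e; transitivity ((QJ o S cur j j' * eps0 j j' * eps0 j' j) * (cm w j j' * cm w j' j)).
        by ring.
      by rewrite c40 // h mulr1.
    + by move=> j Hj; rewrite /e /cm divff ?wnz // mulr1 c50.
  exists e => //.
  apply: (sym_cobound ab dJ) => //.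
    by apply: bichar_cocycle; case: (FP e ok).
  move=> a b Ha Hb; rewrite Fcm // /d /e (mulrC (eps0 a b)) mulfK //.
  exact: e0nz.
Qed.


Unset Implicit Arguments.

Theorem lemma3 (Phi : finType) (o : Phi) (S T : Phi -> Phi -> algC)
    (gT : finGroupType) (cur : gT -> Phi) (J : {group gT}) :
  sc_modular_data o S T cur ->
  ((forall j, j \in J -> ~~ quaternionic o S cur j) <->
     (exists eps : gT -> gT -> algC, eps_ok o S T cur J eps)) /\
  ((forall j, j \in J -> ~~ quaternionic o S cur j) -> eps_H2_bijection o S T cur J).
Proof.
move=> H; have [[ab _ _ _ _] _] := H.
have abJ : abelian J by apply: abelianS ab; apply: subsetT.
have [bs dJ _] := abelian_structure abJ.
split; last by apply: part2 H dJ.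
split; first by apply: part1_exists H dJ.
by case=> eps ok; apply: eps_noquat ok.
Qed.
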